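(* Let $\sigma,\tau$ be $d$-dimensional signatures on a connected graph $G$ with $\sigma\cong\tau$ via a switching map $f:V\to\mathsf{O}(d)$. Then for any distinct $i,j\in V$, $$F_{ij}\,\mathcal{C}^\sigma(i,j)=\mathcal{C}^\tau(i,j)\,F_{ij},\qquad F_{ij}=\begin{bmatrix}f(i)&0_{d\times d}\\0_{d\times d}&f(j)\end{bmatrix}.$$
   Context: $G=(V,E,W)$ is a finite connected weighted graph, $w_{xy}>0$ iff $\{x,y\}\in E$, $\deg(x)=\sum_y w_{xy}$. A $d$-dimensional signature maps oriented edges to $\mathsf{O}(d)$ with $\sigma_{yx}=\sigma_{xy}^{\mathrm T}$. $\sigma\cong\tau$ via $f$ means $f(x)\sigma_{xy}=\tau_{xy}f(y)$ for every oriented edge $(x,y)$. The connection Laplacian $\mathcal{L}^\sigma$ is the $nd\times nd$ block matrix with blocks $\deg(x)I_d$ on the diagonal, $-w_{xy}\sigma_{xy}$ for $x\sim y$, $0$ otherwise. For $M=\begin{bmatrix}A&B\\C&D\end{bmatrix}$, $M/D=A-BD^\dagger C$. The conductance matrix is $\mathcal{C}^\sigma(i,j)=\mathcal{L}^\sigma/\mathcal{L}^\sigma_{\{i,j\}^c,\{i,j\}^c}\in\mathbb{R}^{2d\times2d}$, blocks ordered $i$ then $j$. *)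

(* Defs.v *)
From HB Require Import structures.
From mathcomp Require Import all_boot all_order all_algebra.
From Stdlib Require Import ClassicalEpsilon.
Set Implicit Arguments.
Unset Strict Implicit.
Unset Printing Implicit Defensive.
Import Order.TTheory GRing.Theory Num.Theory.
Local Open Scope ring_scope.

(* Vertices of the graph are 'I_n.  Index (x, a) of the nd x nd block matrix
   (vertex x, coordinate a < d) is the flat index mxvec_index x a : 'I_(n*d);
   this is the block (vertex-major) ordering. *)
Definition unvec (m k : nat) (p : 'I_(m * k)) : 'I_m * 'I_k :=
  enum_val (cast_ord (esym (@mxvec_cast m k)) p).

Definition orthomx (R : realFieldType) (d : nat) (A : 'M[R]_d) : bool :=
  A *m A^T == 1%:M.

Definition penrose (R : realFieldType) (m k : nat)
  (A : 'M[R]_(m, k)) (X : 'M[R]_(k, m)) : Prop :=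
  [/\ A *m X *m A = A, X *m A *m X = X, (A *m X)^T = A *m X & (X *m A)^T = X *m A].

Definition pinv (R : realFieldType) (m k : nat) (A : 'M[R]_(m, k)) : 'M[R]_(k, m) :=
  epsilon (inhabits 0) (penrose A).

Definition schur (R : realFieldType) (N p q : nat)
  (keep : 'I_p -> 'I_N) (comp : 'I_q -> 'I_N) (M : 'M[R]_N) : 'M[R]_p :=
  mxsub keep keep M - mxsub keep comp M *m pinv (mxsub comp comp M) *m mxsub comp keep M.

(* Weighted graph with weights w (w x y > 0 iff {x,y} is an edge). *)
Definition deg (R : realFieldType) (n : nat) (w : 'I_n -> 'I_n -> R) (x : 'I_n) : R :=
  \sum_y w x y.

(* Connection Laplacian: diagonal blocks deg(x) I_d, off-diagonal blocks
   -w_xy sigma_xy (which vanish for non-adjacent x, y since w_xy = 0). *)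
Definition conn_lap (R : realFieldType) (n d : nat) (w : 'I_n -> 'I_n -> R)
  (sigma : 'I_n -> 'I_n -> 'M[R]_d) : 'M[R]_(n * d) :=
  \matrix_(p, q)
    let: (x, a) := unvec p in let: (y, b) := unvec q in
    if x == y then (deg w x *: (1%:M : 'M[R]_d)) a b else (- w x y *: sigma x y) a b.

Definition pair_vert (n : nat) (i j : 'I_n) (t : 'I_2) : 'I_n :=
  if t == ord0 then i else j.

Definition keep_idx (n d : nat) (i j : 'I_n) (k : 'I_(2 * d)) : 'I_(n * d) :=
  let: (t, a) := unvec k in mxvec_index (pair_vert i j t) a.

Definition rest_set (n : nat) (i j : 'I_n) : {set 'I_n} := [set x | (x != i) && (x != j)].

Definition comp_idx (n d : nat) (i j : 'I_n) (k : 'I_(#|rest_set i j| * d)) : 'I_(n * d) :=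
  let: (s, a) := unvec k in mxvec_index (enum_val s) a.

Definition conductance (R : realFieldType) (n d : nat) (w : 'I_n -> 'I_n -> R)
  (sigma : 'I_n -> 'I_n -> 'M[R]_d) (i j : 'I_n) : 'M[R]_(2 * d) :=
  schur (@keep_idx n d i j) (@comp_idx n d i j) (conn_lap w sigma).

Definition Fij (R : realFieldType) (n d : nat) (f : 'I_n -> 'M[R]_d) (i j : 'I_n) :
  'M[R]_(2 * d) :=
  \matrix_(p, q)
    let: (t, a) := unvec p in let: (t', b) := unvec q in
    if t == t' then f (pair_vert i j t) a b else 0.

Definition signature (R : realFieldType) (n d : nat) (w : 'I_n -> 'I_n -> R)
  (sigma : 'I_n -> 'I_n -> 'M[R]_d) : Prop :=
  forall x y, 0 < w x y -> orthomx (sigma x y) /\ sigma y x = (sigma x y)^T.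

Definition switching_equiv (R : realFieldType) (n d : nat) (w : 'I_n -> 'I_n -> R)
  (sigma tau : 'I_n -> 'I_n -> 'M[R]_d) (f : 'I_n -> 'M[R]_d) : Prop :=
  (forall x, orthomx (f x)) /\
  (forall x y, 0 < w x y -> f x *m sigma x y = tau x y *m f y).

Definition conn_weighted_graph (R : realFieldType) (n : nat) (w : 'I_n -> 'I_n -> R) : Prop :=
  [/\ forall x y, w x y = w y x, forall x y, 0 <= w x y, forall x, w x x = 0 &
      forall x y, connect (fun a b => 0 < w a b) x y].

(* Main.v *)
Require Import Defs.
From mathcomp Require Import all_boot all_order all_algebra.
From Stdlib Require Import ClassicalEpsilon.
Import GRing.Theory Num.Theory.
Local Open Scope ring_scope.
Set Implicit Arguments.
Unset Strict Implicit.

Section Pinv.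
Variable R : realFieldType.

Lemma rv_sq0 m (v : 'rV[R]_m) : v *m v^T = 0 -> v = 0.
Proof.
move=> /matrixP /(_ 0 0); rewrite !mxE => H.
have H' : \sum_(j | xpredT j) v 0 j ^+ 2 = 0.
  by rewrite -[RHS]H; apply: eq_bigr => j _; rewrite [v^T j 0]mxE expr2.
apply/rowP => i; rewrite mxE.
have := psumr_eq0P (fun i _ => sqr_ge0 (v 0 i)) H' isT.
by move=> h; apply/eqP; rewrite -sqrf_eq0 h.
Qed.

Lemma unit_gram r m (C : 'M[R]_(r, m)) : row_free C -> C *m C^T \in unitmx.
Proof.
move=> fC; rewrite -row_free_unit -kermx_eq0; apply/eqP/row_matrixP => i.
rewrite row0; set u := row i _.
have hu : u *m (C *m C^T) = 0 by rewrite /u -row_mul mulmx_ker row0.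
have : (u *m C) *m (u *m C)^T = 0 by rewrite trmx_mul !mulmxA -(mulmxA u) hu mul0mx.
move/rv_sq0/eqP; rewrite mulmx_free_eq0 //; exact/eqP.
Qed.

Lemma penrose_fact m k r (Bc : 'M[R]_(m, r)) (Rb : 'M[R]_(r, k)) :
  Rb *m Rb^T \in unitmx -> Bc^T *m Bc \in unitmx ->
  penrose (Bc *m Rb) (Rb^T *m invmx (Rb *m Rb^T) *m invmx (Bc^T *m Bc) *m Bc^T).
Proof.
move=> u1 u2.
have s2 : (invmx (Bc^T *m Bc))^T = invmx (Bc^T *m Bc) by rewrite trmx_inv trmx_mul trmxK.
have s1 : (invmx (Rb *m Rb^T))^T = invmx (Rb *m Rb^T) by rewrite trmx_inv trmx_mul trmxK.
have AX : Bc *m Rb *m (Rb^T *m invmx (Rb *m Rb^T) *m invmx (Bc^T *m Bc) *m Bc^T)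
   = Bc *m invmx (Bc^T *m Bc) *m Bc^T.
  by rewrite -!mulmxA (mulmxA Rb Rb^T) mulKVmx.
have XA : (Rb^T *m invmx (Rb *m Rb^T) *m invmx (Bc^T *m Bc) *m Bc^T) *m (Bc *m Rb)
   = Rb^T *m invmx (Rb *m Rb^T) *m Rb.
  by rewrite -!mulmxA (mulmxA Bc^T Bc) mulKmx.
split.
- by rewrite AX -!mulmxA (mulmxA Bc^T Bc) mulKmx.
- by rewrite XA -!mulmxA (mulmxA Rb Rb^T) mulKmx.
- by rewrite AX !trmx_mul trmxK s2 mulmxA.
- by rewrite XA !trmx_mul trmxK s1 mulmxA.
Qed.

Lemma penrose_ex m k (A : 'M[R]_(m, k)) : exists X, penrose A X.
Proof.
have u1 : row_base A *m (row_base A)^T \in unitmx.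
  by apply: unit_gram; apply: row_base_free.
have u2 : (col_base A)^T *m col_base A \in unitmx.
  rewrite -{2}(trmxK (col_base A)); apply: unit_gram.
  by rewrite /row_free mxrank_tr; apply: col_base_full.
rewrite -{1}(mulmx_base A); eexists; exact: penrose_fact u1 u2.
Qed.

Lemma pinv_spec m k (A : 'M[R]_(m, k)) : penrose A (pinv A).
Proof. rewrite /pinv; apply: epsilon_spec; exact: penrose_ex. Qed.

Lemma penrose_uniq m k (A : 'M[R]_(m, k)) X Y : penrose A X -> penrose A Y -> X = Y.
Proof.
case=> [h1 h2 h3 h4] [g1 g2 g3 g4].
have eAX : A *m X = A *m Y.
  transitivity ((A *m Y) *m (A *m X)); first by rewrite mulmxA g1.
  by rewrite -[A *m Y in LHS]g3 -[A *m X in LHS]h3 -trmx_mul mulmxA h1 g3.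
have eXA : X *m A = Y *m A.
  transitivity ((X *m A) *m (Y *m A)); first by rewrite -!mulmxA (mulmxA A Y A) g1.
  by rewrite -[X *m A in LHS]h4 -[Y *m A in LHS]g4 -trmx_mul -!mulmxA (mulmxA A X A) h1 g4.
by rewrite -h2 -mulmxA eAX mulmxA eXA g2.
Qed.

Lemma penrose_conj q (P : 'M[R]_q) (A X : 'M[R]_q) :
  P *m P^T = 1%:M -> P^T *m P = 1%:M -> penrose A X ->
  penrose (P *m A *m P^T) (P *m X *m P^T).
Proof.
move=> o1 o2 [h1 h2 h3 h4].
have E : forall B C : 'M[R]_q, P *m B *m P^T *m (P *m C *m P^T) = P *m (B *m C) *m P^T.
  by move=> B C; rewrite -!mulmxA (mulmxA P^T) o2 mul1mx !mulmxA.
split; rewrite ?E ?h1 ?h2 //.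
- by rewrite !trmx_mul trmxK -h3 trmx_mul !mulmxA.
- by rewrite !trmx_mul trmxK -h4 trmx_mul !mulmxA.
Qed.

Lemma pinv_conj q (P : 'M[R]_q) (A : 'M[R]_q) :
  P *m P^T = 1%:M -> P^T *m P = 1%:M ->
  pinv (P *m A *m P^T) = P *m pinv A *m P^T.
Proof.
move=> o1 o2; apply: (@penrose_uniq _ _ (P *m A *m P^T)); first exact: pinv_spec.
exact: penrose_conj o1 o2 (pinv_spec A).
Qed.

End Pinv.

Section Blocks.
Variable R : realFieldType.

Lemma schur_conj N p q (keep : 'I_p -> 'I_N) (comp : 'I_q -> 'I_N) (Ls Lt : 'M[R]_N)
  (Fk : 'M[R]_p) (Fc : 'M[R]_q) :
  Fk^T *m Fk = 1%:M -> Fc *m Fc^T = 1%:M -> Fc^T *m Fc = 1%:M ->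
  mxsub keep keep Lt = Fk *m mxsub keep keep Ls *m Fk^T ->
  mxsub keep comp Lt = Fk *m mxsub keep comp Ls *m Fc^T ->
  mxsub comp keep Lt = Fc *m mxsub comp keep Ls *m Fk^T ->
  mxsub comp comp Lt = Fc *m mxsub comp comp Ls *m Fc^T ->
  Fk *m schur keep comp Ls = schur keep comp Lt *m Fk.
Proof.
move=> ok2 oc1 oc2 e1 e2 e3 e4.
rewrite /schur e1 e2 e3 e4 pinv_conj //.
move: (mxsub keep keep Ls) (mxsub keep comp Ls) (mxsub comp keep Ls) (pinv (mxsub comp comp Ls)).
move=> A B C P.
rewrite mulmxBr mulmxBl; congr (_ - _).
  by rewrite -!mulmxA ok2 mulmx1.
by rewrite -!mulmxA !(mulmxA Fc^T Fc) oc2 !mul1mx ok2 mulmx1.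
Qed.

Definition blk m k d (B : 'I_m -> 'I_k -> 'M[R]_d) : 'M[R]_(m * d, k * d) :=
  \matrix_(p, q) B (unvec p).1 (unvec q).1 (unvec p).2 (unvec q).2.

Lemma unvecK m k (x : 'I_m) (a : 'I_k) : unvec (mxvec_index x a) = (x, a).
Proof. by rewrite /unvec /mxvec_index cast_ordK enum_rankK. Qed.

Lemma blkE m k d (B : 'I_m -> 'I_k -> 'M[R]_d) x a y b :
  blk B (mxvec_index x a) (mxvec_index y b) = B x y a b.
Proof. by rewrite mxE !unvecK. Qed.

Lemma blk_eqP m k d (M : 'M[R]_(m * d, k * d)) (B : 'I_m -> 'I_k -> 'M[R]_d) :
  (forall x a y b, M (mxvec_index x a) (mxvec_index y b) = B x y a b) -> M = blk B.
Proof.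
move=> h; apply/matrixP => p q; case/mxvec_indexP: p => x a.
by case/mxvec_indexP: q => y b; rewrite blkE.
Qed.

Lemma eq_blk m k d (B C : 'I_m -> 'I_k -> 'M[R]_d) :
  (forall x y, B x y = C x y) -> blk B = blk C.
Proof. by move=> h; apply: blk_eqP => x a y b; rewrite blkE h. Qed.

Lemma sum_vec m d (F : 'I_(m * d) -> R) :
  \sum_p F p = \sum_x \sum_a F (mxvec_index x a).
Proof.
rewrite pair_big /=.
rewrite (reindex (fun p : 'I_m * 'I_d => mxvec_index p.1 p.2)) //=.
have [g h1 h2] := @curry_mxvec_bij m d.
exists g => [[x a] _|p _]; [exact: (h1 (x, a))|]. by move: (h2 p isT); case: (g p).
Qed.

Lemma blk_mul m k l d (B : 'I_m -> 'I_k -> 'M[R]_d) (C : 'I_k -> 'I_l -> 'M[R]_d) :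
  blk B *m blk C = blk (fun x y => \sum_z B x z *m C z y).
Proof.
apply: blk_eqP => x a y b; rewrite mxE sum_vec summxE.
apply: eq_bigr => z _; rewrite mxE; apply: eq_bigr => c _; by rewrite !blkE.
Qed.

Lemma blk_tr m k d (B : 'I_m -> 'I_k -> 'M[R]_d) :
  (blk B)^T = blk (fun x y => (B y x)^T).
Proof. by apply: blk_eqP => x a y b; rewrite mxE !blkE mxE. Qed.

Definition Dg m d (g : 'I_m -> 'M[R]_d) := blk (fun x y => if x == y then g x else 0).

Lemma Dg_mull m k d (g : 'I_m -> 'M[R]_d) (B : 'I_m -> 'I_k -> 'M[R]_d) :
  Dg g *m blk B = blk (fun x y => g x *m B x y).
Proof.
rewrite blk_mul; apply: eq_blk => x y.
rewrite (bigD1 x) //= eqxx big1 ?addr0 // => z; rewrite eq_sym => /negbTE ->.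
by rewrite mul0mx.
Qed.

Lemma Dg_mulr m k d (g : 'I_k -> 'M[R]_d) (B : 'I_m -> 'I_k -> 'M[R]_d) :
  blk B *m Dg g = blk (fun x y => B x y *m g y).
Proof.
rewrite blk_mul; apply: eq_blk => x y.
rewrite (bigD1 y) //= eqxx big1 ?addr0 // => z /negbTE ->.
by rewrite mulmx0.
Qed.

Lemma Dg_tr m d (g : 'I_m -> 'M[R]_d) : (Dg g)^T = Dg (fun x => (g x)^T).
Proof.
rewrite blk_tr; apply: eq_blk => x y; rewrite eq_sym.
by case: eqP => [->|_]; rewrite ?trmx0.
Qed.

Lemma one_blk m d : (1%:M : 'M[R]_(m * d)) = blk (fun x y => if x == y then 1%:M else 0).
Proof.
apply: blk_eqP => x a y b; rewrite !mxE.
have -> : (mxvec_index x a == mxvec_index y b) = ((x, a) == (y, b)).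
  apply/eqP/eqP => [h|[-> ->]//]; by rewrite -(unvecK x a) -(unvecK y b) h.
rewrite xpair_eqE; case: (x == y) => /=; by rewrite ?mxE.
Qed.

Lemma Dg_orth m d (g : 'I_m -> 'M[R]_d) :
  (forall x, g x *m (g x)^T = 1%:M) -> Dg g *m (Dg g)^T = 1%:M.
Proof.
move=> h; rewrite Dg_tr {1}/Dg Dg_mulr one_blk; apply: eq_blk => x y.
by case: eqP => [->|_]; rewrite ?mul0mx.
Qed.

End Blocks.

Section Main.
Variable R : realFieldType.

Definition Lb n d (w : 'I_n -> 'I_n -> R) (s : 'I_n -> 'I_n -> 'M[R]_d) x y : 'M[R]_d :=
  if x == y then deg w x *: 1%:M else - w x y *: s x y.

Lemma conn_lap_blk n d (w : 'I_n -> 'I_n -> R) (s : 'I_n -> 'I_n -> 'M[R]_d) :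
  conn_lap w s = blk (Lb w s).
Proof. by apply: blk_eqP => x a y b; rewrite mxE !unvecK /Lb; case: eqP. Qed.

Lemma Fij_blk n d (f : 'I_n -> 'M[R]_d) i j : Fij f i j = Dg (fun t => f (pair_vert i j t)).
Proof. rewrite /Dg; apply: blk_eqP => x a y b; rewrite mxE !unvecK /=; by case: eqP => [->|]; rewrite ?mxE. Qed.

Lemma mxsub_blk n m k d (B : 'I_n -> 'I_n -> 'M[R]_d) (U : 'I_m -> 'I_n) (V : 'I_k -> 'I_n)
   u v :
  (forall s a, u (mxvec_index s a) = mxvec_index (U s) a) ->
  (forall s a, v (mxvec_index s a) = mxvec_index (V s) a) ->
  mxsub u v (blk B) = blk (fun s t => B (U s) (V t)).
Proof. by move=> hu hv; apply: blk_eqP => x a y b; rewrite mxE hu hv blkE. Qed.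

End Main.

Unset Implicit Arguments.

Theorem proposition5p6 (R : realFieldType) (n d : nat) (w : 'I_n -> 'I_n -> R)
  (sigma tau : 'I_n -> 'I_n -> 'M[R]_d) (f : 'I_n -> 'M[R]_d) :
  conn_weighted_graph w -> signature w sigma -> signature w tau ->
  switching_equiv w sigma tau f ->
  forall i j : 'I_n, i != j ->
  Fij f i j *m conductance w sigma i j = conductance w tau i j *m Fij f i j.
Proof.
move=> [_ w0 _ _] _ _ [fo fs] i j _.
have fo1 : forall x, f x *m (f x)^T = 1%:M by move=> x; apply/eqP; apply: fo.
have fo2 : forall x, (f x)^T *m f x = 1%:M by move=> x; apply: mulmx1C; apply: fo1.
have LL : forall x y, f x *m Lb w sigma x y = Lb w tau x y *m f y.
  move=> x y; rewrite /Lb; case: eqP => [->|_].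
    by rewrite -!scalemxAl -!scalemxAr mul1mx mulmx1.
  rewrite -scalemxAl -scalemxAr; have := w0 x y; rewrite le0r => /orP [/eqP ->|/fs ->] //.
  by rewrite oppr0 !scale0r.
have Sc : forall p q (U : 'I_p -> 'I_n) (V : 'I_q -> 'I_n),
   blk (fun s t => Lb w tau (U s) (V t)) =
   Dg (fun s => f (U s)) *m blk (fun s t => Lb w sigma (U s) (V t)) *m (Dg (fun t => f (V t)))^T.
  move=> p q U V; rewrite Dg_mull.
  have -> : blk (fun s t => f (U s) *m Lb w sigma (U s) (V t)) =
            blk (fun s t => Lb w tau (U s) (V t)) *m Dg (fun t => f (V t)).
    by rewrite Dg_mulr; apply: eq_blk => x y; apply: LL.
  by rewrite -mulmxA Dg_orth ?mulmx1.
have ok : forall p (U : 'I_p -> 'I_n), (Dg (fun s => f (U s)))^T *m Dg (fun s => f (U s)) = 1%:M.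
  by move=> p U; apply: mulmx1C; apply: Dg_orth.
have hk : forall (s : 'I_2) (a : 'I_d), keep_idx i j (mxvec_index s a) = mxvec_index (pair_vert i j s) a.
  by move=> s a; rewrite /keep_idx unvecK.
have hc : forall (s : 'I_#|rest_set i j|) (a : 'I_d), @comp_idx n d i j (mxvec_index s a) = mxvec_index (enum_val s) a.
  by move=> s a; rewrite /comp_idx unvecK.
rewrite /conductance Fij_blk.
apply: (@schur_conj _ _ _ _ _ _ _ _ _ (Dg (fun s : 'I_#|rest_set i j| => f (enum_val s)))).
- exact: (ok _ (pair_vert i j)).
- exact: Dg_orth.
- exact: (ok _ (fun s : 'I_#|rest_set i j| => enum_val s)).
all: by rewrite !conn_lap_blk ?(mxsub_blk _ hk hc, mxsub_blk _ hk hk, mxsub_blk _ hc hk, mxsub_blk _ hc hc) Sc.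
Qed.
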